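(* Assume the feasible set of the mixed-integer semidefinite program $$\min\{\langle C,X\rangle : \mathcal{A}(X)=b,\ X\succeq \mathbf{0},\ X_{ij}\in B_{ij}\ \forall (i,j)\in\mathcal{J}\}$$ is nonempty and bounded. Let $z_{LD}=\sup\{g(S,\lambda): S\succeq\mathbf{0},\ \lambda\in\mathbb{R}^{m_1}\}$ with $g(S,\lambda)=\min\{\langle C,X\rangle-\langle S,X\rangle+\lambda^\top(\mathcal{A}_1(X)-b_1): X\in P\}$, and let $\hat z$ denote the optimal value of $$\min\{\langle C,X\rangle: \mathcal{A}_1(X)=b_1,\ X\succeq\mathbf{0},\ X\in\mathrm{conv}(P)\},$$ provided it exists. Then $z_{LD}=\hat z$.
   Context: $\mathcal{S}^n$ denotes the real symmetric $n\times n$ matrices with $\langle X,Y\rangle=\mathrm{tr}(XY)$; $X\succeq\mathbf{0}$ means positive semidefinite. $C\in\mathcal{S}^n$, $b\in\mathbb{R}^m$, $\mathcal{A}:\mathcal{S}^n\to\mathbb{R}^m$ linear with $\mathcal{A}(X)_i=\langle A_i,X\rangle$. $\mathcal{J}\subseteq[n]\times[n]$ and for $(i,j)\in\mathcal{J}$, $B_{ij}\subseteq\mathbb{Z}$ is a finite set. The constraints $\mathcal{A}(X)=b$ are split into $\mathcal{A}_1(X)=b_1$ ($b_1\in\mathbb{R}^{m_1}$) and $\mathcal{A}_2(X)=b_2$, and $P=\{X\in\mathcal{S}^n:\mathcal{A}_2(X)=b_2,\ X_{ij}\in B_{ij}\ \forall(i,j)\in\mathcal{J}\}$, which is assumed bounded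 (e.g. after adding bounds on the continuous variables to $\mathcal{A}_2(X)=b_2$). *)

(* Defs.v *)
From HB Require Import structures.
From mathcomp Require Import all_boot all_order all_algebra.
From mathcomp Require Import classical_sets reals constructive_ereal ereal.
Set Implicit Arguments. Unset Strict Implicit. Unset Printing Implicit Defensive.
Import Order.TTheory GRing.Theory Num.Theory.
Local Open Scope ring_scope.
Local Open Scope classical_set_scope.

Section Defs.
Variables (R : realType) (n : nat).

Definition symmx (X : 'M[R]_n) : Prop := X^T = X.

Definition inner (X Y : 'M[R]_n) : R := \tr (X *m Y).

Definition psd (X : 'M[R]_n) : Prop :=
  symmx X /\ forall v : 'cV[R]_n, 0 <= (v^T *m X *m v) 0 0.

Definition lin_eq (m : nat) (A : 'I_m -> 'M[R]_n) (b : 'I_m -> R)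
  (X : 'M[R]_n) : Prop := forall i, inner (A i) X = b i.

Definition Pset (m2 : nat) (A2 : 'I_m2 -> 'M[R]_n) (b2 : 'I_m2 -> R)
  (J : {set 'I_n * 'I_n}) (B : 'I_n -> 'I_n -> seq int) : set 'M[R]_n :=
  [set X | symmx X /\ lin_eq A2 b2 X /\
           forall i j, (i, j) \in J -> exists2 z, z \in B i j & X i j = z%:~R].

Definition conv (Q : set 'M[R]_n) : set 'M[R]_n :=
  [set X | exists k (w : 'I_k -> R) (Y : 'I_k -> 'M[R]_n),
     [/\ forall t, 0 <= w t, \sum_(t < k) w t = 1, forall t, Q (Y t)
       & X = \sum_(t < k) w t *: Y t]].

Definition mx_bounded (Q : set 'M[R]_n) : Prop :=
  exists M : R, forall X, Q X -> forall i j, `|X i j| <= M.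

End Defs.

(* Main.v *)
Require Import Defs.
From HB Require Import structures.
From mathcomp Require Import all_boot all_order all_algebra.
From mathcomp Require Import classical_sets reals constructive_ereal ereal.
From mathcomp Require Import all_classical all_reals.
From mathcomp Require Import topology normedtype derive.
From mathcomp Require Import boolp ring lra zify.
Set Implicit Arguments. Unset Strict Implicit. Unset Printing Implicit Defensive.
Import Order.TTheory GRing.Theory Num.Theory numFieldTopology.Exports.
Local Open Scope ring_scope.
Local Open Scope classical_set_scope.


Section Quad.
Variables (R : realType) (n : nat).
Implicit Types (M X : 'M[R]_n) (u v : 'I_n -> R).

Definition bil M u v := \sum_i \sum_j u i * M i j * v j.
Definition qf M u := bil M u u.
Definition frob M X := \sum_i \sum_j M i j * X i j.
Definition ev (k : 'I_n) : 'I_n -> R := fun i => (i == k)%:R.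

Lemma sum_delta (k : 'I_n) (F : 'I_n -> R) : \sum_i (i == k)%:R * F i = F k.
Proof.
rewrite (bigD1 k) //= eqxx mul1r big1 ?addr0 // => i /negPf ->; by rewrite mul0r.
Qed.

Lemma bilDl M a b u w v :
  bil M (fun i => a * u i + b * w i) v = a * bil M u v + b * bil M w v.
Proof.
rewrite /bil !mulr_sumr -big_split /=; apply: eq_bigr => i _.
rewrite !mulr_sumr -big_split /=; apply: eq_bigr => j _; ring.
Qed.

Lemma bilDr M a b u w v :
  bil M v (fun i => a * u i + b * w i) = a * bil M v u + b * bil M v w.
Proof.
rewrite /bil !mulr_sumr -big_split /=; apply: eq_bigr => i _.
rewrite !mulr_sumr -big_split /=; apply: eq_bigr => j _; ring.
Qed.

Lemma bil_el M k v : bil M (ev k) v = \sum_j M k j * v j.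
Proof.
rewrite /bil /ev -(sum_delta k (fun i => \sum_j M i j * v j)).
apply: eq_bigr => i _; rewrite mulr_sumr; apply: eq_bigr => j _; ring.
Qed.

Lemma bil_er M k u : bil M u (ev k) = \sum_i u i * M i k.
Proof.
rewrite /bil; apply: eq_bigr => i _.
rewrite -(sum_delta k (fun j => u i * M i j)); apply: eq_bigr => j _.
rewrite /ev; ring.
Qed.

Lemma bil_ee M k l : bil M (ev k) (ev l) = M k l.
Proof.
rewrite bil_el -(sum_delta l (M k)); apply: eq_bigr => j _; rewrite /ev; ring.
Qed.

Definition symf X := forall i j, X i j = X j i.
Definition psdq X := forall u, 0 <= qf X u.

Lemma zero_row X k j : symf X -> psdq X -> X k k = 0 -> X k j = 0.
Proof.
move=> sX pX Xkk.
have [->//|jk] := eqVneq j k.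
apply/eqP/negP => /negP Xkj.
pose t := - (X j j + 1) / (2 * X k j).
have := pX (fun i => t * ev k i + 1 * ev j i).
rewrite /qf bilDl !bilDr !bil_ee Xkk (sX j k).
have -> : t * (t * 0 + 1 * X k j) + 1 * (t * X k j + 1 * X j j) =
          2 * t * X k j + X j j by ring.
rewrite /t; have -> : 2 * (- (X j j + 1) / (2 * X k j)) * X k j = - (X j j + 1).
  by field.
have -> : - (X j j + 1) + X j j = -1 by ring.
move=> H; lra.
Qed.

Lemma qf_ev X k : qf X (ev k) = X k k.
Proof. exact: bil_ee. Qed.

Lemma frobD M X Y : frob M (X + Y) = frob M X + frob M Y.
Proof.
rewrite /frob -big_split; apply: eq_bigr => i _; rewrite -big_split.
by apply: eq_bigr => j _; rewrite mxE mulrDr.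
Qed.

Lemma frobZ M a X : frob M (a *: X) = a * frob M X.
Proof.
rewrite /frob mulr_sumr; apply: eq_bigr => i _; rewrite mulr_sumr.
by apply: eq_bigr => j _; rewrite mxE /=; ring.
Qed.

Lemma frob_rank1 M (x : 'I_n -> R) : frob M (\matrix_(i, j) (x i * x j)) = qf M x.
Proof.
rewrite /frob /qf /bil; apply: eq_bigr => i _; apply: eq_bigr => j _.
by rewrite mxE; ring.
Qed.

Lemma frob_psd_ge0 M X : psdq M -> symf X -> psdq X -> 0 <= frob M X.
Proof.
move=> pM.
suff H : forall p X, symf X -> psdq X ->
   (forall i j : 'I_n, (i < n - p)%N -> X i j = 0) -> 0 <= frob M X.
  by move=> sX pX; apply: (H n) => // i j; rewrite subnn.
elim=> [|p IH] {}X sX pX Z.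
  rewrite /frob big1 // => i _; rewrite big1 // => j _.
  by rewrite Z ?mulr0 // subn0.
have [np|pn] := leqP n p.
  apply: IH => // i j; rewrite (_ : n - p = 0)%N //; apply/eqP; rewrite subn_eq0 //.
have kn : (n - p.+1 < n)%N by rewrite ltn_subLR ?addSn ?ltnS ?leq_addl // ltnW.
pose k := Ordinal kn.
have [Xkk0|Xkk0] := eqVneq (X k k) 0.
  apply: IH => // i j; rewrite ltnNge => ipn.
  have [ik|ik] := ltnP i (n - p.+1); first exact: Z.
  have ek : i = k.
    apply: val_inj => /=; apply/eqP; rewrite eqn_leq ik andbT.
    by move: ipn; rewrite -ltnNge subnS; case: (n - p)%N => //= m; rewrite ltnS.
  by rewrite ek; apply: zero_row.
have Xkp : 0 < X k k by rewrite lt0r Xkk0 -qf_ev pX.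
pose x i := X i k.
pose X' := \matrix_(i, j) (X i j - x i * x j / X k k).
have -> : X = X' + (X k k)^-1 *: \matrix_(i, j) (x i * x j).
  apply/matrixP => i j; rewrite !mxE; field; exact: Xkk0.
rewrite frobD frobZ frob_rank1; apply: addr_ge0; last first.
  by apply: mulr_ge0; [rewrite invr_ge0 ltW | apply: pM].
apply: IH.
- by move=> i j; rewrite !mxE sX /x; ring.
- move=> u.
  pose be := \sum_j X k j * u j.
  have qX' : qf X' u = qf X u - be * be / X k k.
    rewrite /qf /bil /be /x.
    have -> : be * be / X k k = \sum_i \sum_j u i * (X i k * X k j / X k k) * u j.
      rewrite /be mulr_suml mulr_suml; apply: eq_bigr => i _.
      rewrite mulr_sumr mulr_suml; apply: eq_bigr => j _; rewrite (sX i k); ring.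
    rewrite -sumrB; apply: eq_bigr => i _; rewrite -sumrB; apply: eq_bigr => j _.
    rewrite mxE /x (sX j k); ring.
  rewrite qX'.
  have := pX (fun i => 1 * u i + (- (be / X k k)) * ev k i).
  rewrite /qf bilDl !bilDr bil_ee bil_el bil_er -/be.
  have -> : \sum_i u i * X i k = be.
    by rewrite /be; apply: eq_bigr => i _; rewrite sX mulrC.
  suff -> : 1 * (1 * bil X u u + - (be / X k k) * be) +
    - (be / X k k) * (1 * be + - (be / X k k) * X k k) = bil X u u - be * be / X k k by [].
  by field.
- move=> i j ipn; rewrite mxE /x.
  have [ik|ik] := ltnP i (n - p.+1).
    by rewrite (Z i j) // (Z i k) // !mul0r subr0.
  have ek : i = k.
    apply: val_inj => /=; apply/eqP; rewrite eqn_leq ik andbT.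
    by move: ipn; rewrite subnS; case: (n - p)%N => //= m; rewrite ltnS.
  rewrite ek (sX j k); field; exact: Xkk0.
Qed.
End Quad.

Section Conn.
Variables (R : realType) (n : nat).
Implicit Types (M X Y : 'M[R]_n).

Lemma innerE M X : inner M X = \sum_i \sum_j M i j * X j i.
Proof. by rewrite /inner /mxtrace; apply: eq_bigr => i _; rewrite mxE. Qed.

Lemma symmx_symf X : symmx X -> symf X.
Proof. by move=> sX i j; rewrite -[in LHS]sX mxE. Qed.

Lemma symf_symmx X : symf X -> symmx X.
Proof. by move=> sX; apply/matrixP => i j; rewrite mxE sX. Qed.

Lemma inner_frob M X : symf X -> inner M X = frob M X.
Proof.
move=> sX; rewrite innerE /frob; apply: eq_bigr => i _; apply: eq_bigr => j _.
by rewrite sX.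
Qed.

Lemma quadE X (v : 'cV[R]_n) : (v^T *m X *m v) 0 0 = qf X (fun i => v i 0).
Proof.
rewrite mxE /qf /bil exchange_big; apply: eq_bigr => j _ ; rewrite mxE.
rewrite mulr_suml; apply: eq_bigr => i _; by rewrite mxE.
Qed.


Lemma qf_ext X u u' : (forall i, u i = u' i) -> qf X u = qf X u'.
Proof.
by move=> e; rewrite /qf /bil; apply: eq_bigr => i _; apply: eq_bigr => j _; rewrite !e.
Qed.

Lemma psd_psdq X : psd X -> symf X /\ psdq X.
Proof.
move=> [sX pX]; split; first exact: symmx_symf.
move=> u; have := pX (\col_i u i); rewrite quadE.
by rewrite (@qf_ext X _ u) // => i; rewrite mxE.
Qed.

Lemma psdq_psd X : symf X -> psdq X -> psd X.
Proof. by move=> sX pX; split; [exact: symf_symmx | move=> v; rewrite quadE]. Qed.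

Lemma qfD M N u : qf (M + N) u = qf M u + qf N u.
Proof.
rewrite /qf /bil -big_split; apply: eq_bigr => i _; rewrite -big_split.
by apply: eq_bigr => j _; rewrite mxE /=; ring.
Qed.

Lemma qfZ a M u : qf (a *: M) u = a * qf M u.
Proof.
rewrite /qf /bil mulr_sumr; apply: eq_bigr => i _; rewrite mulr_sumr.
by apply: eq_bigr => j _; rewrite mxE /=; ring.
Qed.

Lemma qfT M u : qf M^T u = qf M u.
Proof.
rewrite /qf /bil exchange_big; apply: eq_bigr => i _.
by apply: eq_bigr => j _; rewrite mxE /=; ring.
Qed.

Lemma frobDl M N X : frob (M + N) X = frob M X + frob N X.
Proof.
rewrite /frob -big_split; apply: eq_bigr => i _; rewrite -big_split.
by apply: eq_bigr => j _; rewrite mxE /=; ring.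
Qed.

Lemma frobZl a M X : frob (a *: M) X = a * frob M X.
Proof.
rewrite /frob mulr_sumr; apply: eq_bigr => i _; rewrite mulr_sumr.
by apply: eq_bigr => j _; rewrite mxE /=; ring.
Qed.

Lemma frobTl M X : symf X -> frob M^T X = frob M X.
Proof.
move=> sX; rewrite /frob exchange_big; apply: eq_bigr => i _.
by apply: eq_bigr => j _; rewrite mxE sX.
Qed.

Definition r1 (v : 'I_n -> R) : 'M[R]_n := \matrix_(i, j) (v i * v j).

Lemma qf_r1 v u : qf (r1 v) u = (\sum_i u i * v i) ^+ 2.
Proof.
rewrite /qf /bil expr2 mulr_suml; apply: eq_bigr => i _; rewrite mulr_sumr.
by apply: eq_bigr => j _; rewrite mxE /=; ring.
Qed.

Lemma r1_sym v : symf (r1 v).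
Proof. by move=> i j; rewrite !mxE mulrC. Qed.

Lemma r1_psdq v : psdq (r1 v).
Proof. by move=> u; rewrite qf_r1 sqr_ge0. Qed.

Lemma psdq_add X Y : psdq X -> psdq Y -> psdq (X + Y).
Proof. by move=> pX pY u; rewrite qfD addr_ge0. Qed.

Lemma symf_add X Y : symf X -> symf Y -> symf (X + Y).
Proof. by move=> sX sY i j; rewrite !mxE sX sY. Qed.

Lemma psdq_scale a X : 0 <= a -> psdq X -> psdq (a *: X).
Proof. by move=> a0 pX u; rewrite qfZ mulr_ge0. Qed.

Lemma symf_scale a X : symf X -> symf (a *: X).
Proof. by move=> sX i j; rewrite !mxE sX. Qed.

Lemma inner_sum M k (w : 'I_k -> R) (Y : 'I_k -> 'M[R]_n) :
  inner M (\sum_t w t *: Y t) = \sum_t w t * inner M (Y t).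
Proof.
rewrite innerE.
under eq_bigr => i _ do under eq_bigr => j _ do rewrite summxE mulr_sumr.
under [RHS]eq_bigr => t _ do rewrite innerE mulr_sumr.
rewrite [RHS]exchange_big; apply: eq_bigr => i _.
under [RHS]eq_bigr => t _ do rewrite mulr_sumr.
rewrite [RHS]exchange_big; apply: eq_bigr => j _.
apply: eq_bigr => t _; rewrite mxE; ring.
Qed.

Lemma inner_lin M a b X Y : inner M (a *: X + b *: Y) = a * inner M X + b * inner M Y.
Proof.
rewrite !innerE !mulr_sumr -big_split; apply: eq_bigr => i _.
rewrite !mulr_sumr -big_split; apply: eq_bigr => j _; rewrite !mxE /=; ring.
Qed.

End Conn.

Section Carath.
Variables (R : realType) (n : nat) (Q : set 'M[R]_n).

Definition convk k (X : 'M[R]_n) := exists (w : 'I_k -> R) (Y : 'I_k -> 'M[R]_n),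
  [/\ forall t, 0 <= w t, \sum_t w t = 1, forall t, Q (Y t)
    & X = \sum_t w t *: Y t].

Lemma convk_pos k X : convk k X -> (0 < k)%N.
Proof.
case: k => // [[w [Y [_ s1 _ _]]]]; move: s1; rewrite big_ord0 => /eqP.
by rewrite eq_sym oner_eq0.
Qed.

Lemma convk_pad k X : convk k X -> convk k.+1 X.
Proof.
move=> cX; have kp := convk_pos cX; move: cX => [w [Y [w0 s1 QY ->]]].
pose t0 := Ordinal kp.
exists (fun t => if unlift ord_max t is Some t' then w t' else 0).
exists (fun t => if unlift ord_max t is Some t' then Y t' else Y t0).
split.
- by move=> t; case: unlift.
- by rewrite (bigD1_ord ord_max) //= unlift_none add0r -s1; apply: eq_bigr => t _; rewrite liftK.
- by move=> t; case: unlift.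
- rewrite (bigD1_ord ord_max) //= unlift_none scale0r add0r.
  by apply: eq_bigr => t _; rewrite liftK.
Qed.

Lemma exists_pos k (u : 'I_k -> R) : \sum_t u t = 0 -> (exists t, u t != 0) ->
  exists t, 0 < u t.
Proof.
move=> s0 [t0 ut0]; apply/not_existsP => /= H.
have np t : 0 <= - u t by rewrite oppr_ge0 leNgt; apply/negP => ut; exact: H t ut.
have := @psumr_eq0P _ _ predT (fun t => - u t) (fun t _ => np t).
rewrite sumrN s0 oppr0 => /(_ erefl t0 isT) /eqP; rewrite oppr_eq0.
by move/eqP => e; move: ut0; rewrite e eqxx.
Qed.

Definition DD := #|{: 'I_n * 'I_n}|.

Lemma convk_reduce k X : (DD < k)%N -> convk k.+1 X -> convk k X.
Proof.
move=> Dk [w [Y [w0 s1 QY eX]]].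
pose Mx : 'M[R]_(k.+1, DD.+1) := \matrix_(t, c)
  (if unlift ord0 c is Some c' then Y t (enum_val c').1 (enum_val c').2 else 1).
have : kermx Mx != 0.
  rewrite -mxrank_eq0 mxrank_ker subn_eq0 -ltnNge.
  by apply: (leq_ltn_trans (rank_leq_col Mx)); rewrite ltnS.
move=> nz.
have [r [c0 Hnz]] : exists r c, kermx Mx r c != 0.
  apply/not_existsP => H; move/eqP: nz; apply; apply/matrixP => r c.
  rewrite [RHS]mxE; apply/eqP; apply/negPn/negP => h; apply: (H r); exists c; exact: h.
pose u t := kermx Mx r t.
have uM c : \sum_t u t * Mx t c = 0.
  have := congr1 (fun A : 'M[R]_(k.+1, DD.+1) => A r c) (mulmx_ker Mx).
  by rewrite /= mxE [X in _ = X]mxE.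
have su : \sum_t u t = 0.
  rewrite -[RHS](uM ord0); apply: eq_bigr => t _; rewrite mxE unlift_none mulr1 //.
have uY : \sum_t u t *: Y t = 0.
  apply/matrixP => i j; rewrite summxE [RHS]mxE -[RHS](uM (lift ord0 (enum_rank (i, j)))).
  by apply: eq_bigr => t _; rewrite !mxE liftK enum_rankK.
have [t1 ut1] : exists t, 0 < u t.
  apply: exists_pos su _; exists c0; exact: Hnz.
case: (@arg_minP _ _ _ t1 [pred t | 0 < u t] (fun t => w t / u t) ut1).
move=> s us smin.
pose th := w s / u s.
have th0 : 0 <= th by rewrite divr_ge0 // ltW.
pose w' t := w t - th * u t.
have w'0 t : 0 <= w' t.
  rewrite /w' subr_ge0; have [ut|ut] := ltP 0 (u t).
    by rewrite -ler_pdivlMr // smin.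
  by apply: le_trans (w0 t); rewrite mulr_ge0_le0.
have w's : w' s = 0 by rewrite /w' /th mulfVK ?subrr // gt_eqF.
have sw' : \sum_t w' t = 1 by rewrite /w' sumrB -mulr_sumr su mulr0 subr0.
have eX' : X = \sum_t w' t *: Y t.
  rewrite /w'; under eq_bigr => t _ do rewrite scalerBl -scalerA.
  by rewrite sumrB -scaler_sumr uY scaler0 subr0.
exists (fun t => w' (lift s t)), (fun t => Y (lift s t)); split.
- by move=> t; exact: w'0.
- by move: sw'; rewrite (bigD1_ord s) //= w's add0r.
- by move=> t; exact: QY.
- by rewrite eX' (bigD1_ord s) //= w's scale0r add0r.
Qed.

Lemma caratheodory X : conv Q X -> convk DD.+1 X.
Proof.
move=> [k [w [Y H]]].
have ck : convk k X by exists w, Y.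
have [kD|Dk] := leqP k DD.+1.
  suff H2 : forall j, convk (DD.+1 - j) X -> convk DD.+1 X.
    by apply: (H2 (DD.+1 - k)%N); rewrite subKn.
  elim=> [|j IH]; first by rewrite subn0.
  have [jD|Dj] := ltnP j DD.+1.
    by move=> /convk_pad; rewrite subnSK //; exact: IH.
  by move=> /convk_pos; lia.
suff H2 : forall m, convk (DD.+1 + m) X -> convk DD.+1 X.
  by apply: (H2 (k - DD.+1)%N); rewrite subnKC // ltnW.
elim=> [|m IH]; first by rewrite addn0.
rewrite addnS => /convk_reduce h; apply: IH; apply: h.
by rewrite ltnS leq_addr.
Qed.

End Carath.

Section ConvLemmas.
Variables (R : realType) (n : nat) (Q : set 'M[R]_n).

Lemma conv_of X : Q X -> conv Q X.
Proof.
move=> QX; exists 1%N, (fun=> 1), (fun=> X); split.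
- by move=> _; exact: ler01.
- by rewrite big_ord1.
- by [].
- by rewrite big_ord1 scale1r.
Qed.

Lemma convk_conv k X : convk Q k X -> conv Q X.
Proof. by move=> [w [Y H]]; exists k, w, Y. Qed.

Lemma conv_comb2 X Y t : conv Q X -> conv Q Y -> 0 <= t <= 1 ->
  conv Q ((1 - t) *: X + t *: Y).
Proof.
move=> [k1 [w1 [Y1 [w10 s1 Q1 ->]]]] [k2 [w2 [Y2 [w20 s2 Q2 ->]]]] /andP[t0 t1].
have sl a : fintype.split (lshift k2 a) = inl a := unsplitK (inl a).
have sr b : fintype.split (rshift k1 b) = inr b := unsplitK (inr b).
exists (k1 + k2)%N.
exists (fun i => match fintype.split i with inl a => (1 - t) * w1 a | inr b => t * w2 b end).
exists (fun i => match fintype.split i with inl a => Y1 a | inr b => Y2 b end).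
split.
- move=> i; case: fintype.split => a; apply: mulr_ge0 => //; by rewrite subr_ge0.
- rewrite big_split_ord /=.
  under eq_bigr => a _ do rewrite sl.
  under [X in _ + X]eq_bigr => b _ do rewrite sr.
  by rewrite -!mulr_sumr s1 s2 !mulr1 subrK.
- by move=> i; case: fintype.split.
- rewrite big_split_ord /=.
  under [X in _ = X + _]eq_bigr => a _ do rewrite sl.
  under [X in _ = _ + X]eq_bigr => b _ do rewrite sr.
  rewrite !scaler_sumr; congr (_ + _); apply: eq_bigr => i _; by rewrite scalerA.
Qed.

Lemma conv_bound M X : (forall Y, Q Y -> forall i j, `|Y i j| <= M) -> conv Q X ->
  forall i j, `|X i j| <= M.
Proof.
move=> HM [k [w [Y [w0 s1 QY ->]]]] i j.
rewrite summxE; apply: le_trans (ler_norm_sum _ _ _) _.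
have -> : M = \sum_t w t * M by rewrite -mulr_suml s1 mul1r.
apply: ler_sum => t _; rewrite mxE normrM ger0_norm //.
by apply: ler_wpM2l => //; apply: HM.
Qed.

End ConvLemmas.



Section Topo.
Variables (R : realType) (I : eqType).
Notation T := {ptws I -> R}.
Implicit Types (f g : T -> R).

Lemma cont_proj i : continuous (fun z : T => z i).
Proof. exact: (@proj_continuous I (fun=> R) i). Qed.

Lemma cont_cst (c : R) : continuous (fun _ : T => c).
Proof. exact: cst_continuous. Qed.

Lemma cont_add f g : continuous f -> continuous g -> continuous (fun z => f z + g z).
Proof. move=> cf cg x; exact: (@continuousD R R^o T f g x (cf x) (cg x)). Qed.

Lemma cont_mul f g : continuous f -> continuous g -> continuous (fun z => f z * g z).
Proof. move=> cf cg x; exact: (@continuousM R T f g x (cf x) (cg x)). Qed.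

Lemma cont_opp f : continuous f -> continuous (fun z => - f z).
Proof. move=> cf x; exact: (@continuousN R R^o T f x (cf x)). Qed.

Lemma cont_sub f g : continuous f -> continuous g -> continuous (fun z => f z - g z).
Proof. by move=> cf cg; apply: cont_add => //; apply: cont_opp. Qed.

Lemma cont_sum (J : Type) (s : seq J) (F : J -> T -> R) :
  (forall j, continuous (F j)) -> continuous (fun z => \sum_(j <- s) F j z).
Proof.
move=> cF; elim: s => [|j s IH].
  have -> : (fun z => \sum_(j <- [::]) F j z) = (fun=> 0).
    by apply/funext => z; rewrite big_nil.
  exact: cont_cst.
have -> : (fun z => \sum_(j0 <- j :: s) F j0 z) = (fun z => F j z + \sum_(j0 <- s) F j0 z).
  by apply/funext => z; rewrite big_cons.
exact: cont_add.
Qed.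

Lemma closed_eqf f g : continuous f -> continuous g -> closed [set z | f z = g z].
Proof.
move=> cf cg.
have -> : [set z | f z = g z] = (fun z => f z - g z) @^-1` [set x | x = 0].
  apply/seteqP; split => z /= H; first by rewrite H subrr.
  by apply/eqP; rewrite -subr_eq0 H.
apply: preimage_closed; last exact: closed_eq.
by move=> z _; apply: cont_sub.
Qed.

Lemma closed_lef f g : continuous f -> continuous g -> closed [set z | f z <= g z].
Proof.
move=> cf cg.
have -> : [set z | f z <= g z] = (fun z => g z - f z) @^-1` [set x | 0 <= x].
  by apply/seteqP; split => z /=; rewrite subr_ge0.
apply: preimage_closed; last exact: closed_ge.
by move=> z _; apply: cont_sub.
Qed.

Lemma closed_forall (J : Type) (A : J -> set T) :
  (forall j, closed (A j)) -> closed [set z | forall j, A j z].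
Proof.
move=> cA.
have -> : [set z | forall j, A j z] = \bigcap_(j in [set: J]) A j.
  by apply/seteqP; split => z /= H j //; apply: H.
by apply: closed_bigI => j _.
Qed.

Lemma closed_and (A B : set T) : closed A -> closed B -> closed [set z | A z /\ B z].
Proof. exact: closedI. Qed.

Lemma closed_imp (b : bool) (A : set T) : closed A -> closed [set z | b -> A z].
Proof.
case: b => cA.
  by have -> : [set z | true -> A z] = A by apply/seteqP; split => z /= H //; apply: H.
by have -> : [set z | false -> A z] = setT by apply/seteqP; split.
Qed.

Lemma closed_exseq (J : eqType) (s : seq J) (A : J -> set T) :
  (forall j, closed (A j)) -> closed [set z | exists2 j, j \in s & A j z].
Proof.
move=> cA.
have -> : [set z | exists2 j, j \in s & A j z] = \big[setU/set0]_(j <- s) A j.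
  elim: s => [|j s IH].
    by rewrite big_nil; apply/seteqP; split => z //= [].
  rewrite big_cons -IH; apply/seteqP; split => z /=.
    move=> [j']; rewrite in_cons => /orP[/eqP ->|js] Az; [by left | by right; exists j'].
  by move=> [Az|[j' js Az]]; [exists j; rewrite ?mem_head | exists j'; rewrite // in_cons js orbT].
by apply: closed_bigsetU => j _.
Qed.

Lemma compact_box (M : R) : compact [set z : T | forall i, `[-M, M] (z i)].
Proof.
have := @tychonoff I (fun=> R) (fun=> `[-M, M]%classic) (fun=> @segment_compact R (-M) M).
exact.
Qed.

Lemma min_exists (Om : set T) (F : T -> R) (M : R) :
  Om !=set0 -> closed Om -> (forall z, Om z -> forall i, `|z i| <= M) ->
  continuous F -> exists2 zs, Om zs & forall z, Om z -> F zs <= F z.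
Proof.
move=> ne cl bd cF.
have cp : compact Om.
  apply: (subclosed_compact cl (@compact_box M)) => z Oz i /=.
  by rewrite in_itv /= -ler_norml bd.
have [zs zsO H] := compact_EVT_min ne cp (continuous_subspaceT cF).
exists zs; first by rewrite inE in zsO.
by move=> z Oz; apply: H; rewrite inE.
Qed.

End Topo.


Section Main.
Variables (R : realType) (n m1 m2 : nat)
  (C : 'M[R]_n) (A1 : 'I_m1 -> 'M[R]_n) (b1 : 'I_m1 -> R)
  (A2 : 'I_m2 -> 'M[R]_n) (b2 : 'I_m2 -> R)
  (J : {set 'I_n * 'I_n}) (B : 'I_n -> 'I_n -> seq int).
Local Notation P := (Pset A2 b2 J B).


Definition Lg (S : 'M[R]_n) (lam : 'I_m1 -> R) (Y : 'M[R]_n) :=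
  inner C Y - inner S Y + \sum_(i < m1) lam i * (inner (A1 i) Y - b1 i).

Lemma Lg_conv S lam k (w : 'I_k -> R) (Y : 'I_k -> 'M[R]_n) : \sum_t w t = 1 ->
  \sum_t w t * Lg S lam (Y t) = Lg S lam (\sum_t w t *: Y t).
Proof.
move=> s1; rewrite /Lg !inner_sum.
have -> : \sum_(i < m1) lam i * (inner (A1 i) (\sum_t w t *: Y t) - b1 i) =
   \sum_(i < m1) \sum_t w t * (lam i * (inner (A1 i) (Y t) - b1 i)).
  apply: eq_bigr => i _; rewrite inner_sum.
  rewrite -[in LHS](mulr1 (b1 i)) -[in LHS]s1 mulr_sumr -sumrB mulr_sumr.
  by apply: eq_bigr => t _; ring.
rewrite exchange_big -sumrB -big_split /=; apply: eq_bigr => t _.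
by rewrite mulrDr mulrBr [w t * \sum_(i < m1) _]mulr_sumr.
Qed.

Lemma avg_le k (w : 'I_k -> R) (f : 'I_k -> R) c :
  (forall t, 0 <= w t) -> \sum_t w t = 1 -> \sum_t w t * f t = c ->
  exists t, f t <= c.
Proof.
move=> w0 s1 sf; apply/not_existsP => H.
have lt t : 0 < f t - c by rewrite subr_gt0 ltNge; apply/negP; exact: H.
have h : \sum_t w t * (f t - c) = 0.
  have -> : \sum_t w t * (f t - c) = \sum_t w t * f t - (\sum_t w t) * c.
    by rewrite mulr_suml -sumrB; apply: eq_bigr => t _; ring.
  by rewrite sf s1 mul1r subrr.
have H2 := @psumr_eq0P _ _ predT (fun t => w t * (f t - c))
   (fun t _ => mulr_ge0 (w0 t) (ltW (lt t))) h.
have : \sum_t w t = 0.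
  apply: big1 => t _; have /eqP := H2 t isT.
  by rewrite mulf_eq0 (gt_eqF (lt t)) orbF => /eqP.
by rewrite s1 => /eqP; rewrite oner_eq0.
Qed.

Lemma inner_psd_ge0 (S X : 'M[R]_n) : psd S -> psd X -> 0 <= inner S X.
Proof.
move=> /psd_psdq[sS pS] /psd_psdq[sX pX]; rewrite inner_frob //.
exact: frob_psd_ge0.
Qed.

Lemma weak (S : 'M[R]_n) (lam : 'I_m1 -> R) (X : 'M[R]_n) : psd S -> lin_eq A1 b1 X -> psd X -> conv P X ->
  (ereal_inf [set (Lg S lam Y)%:E | Y in P] <= (inner C X)%:E)%E.
Proof.
move=> pS lX pX cX; have := cX; move=> [k [w [Y [w0 s1 PY eX]]]].
have [t Ht] := avg_le w0 s1 (Lg_conv S lam Y s1).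
apply: ge_ereal_inf; exists (Lg S lam (Y t))%:E; first by exists (Y t).
rewrite lee_fin; apply: le_trans Ht _; rewrite -eX /Lg.
rewrite big1 ?addr0; last by move=> i _; rewrite lX subrr mulr0.
by rewrite lerBlDr lerDl inner_psd_ge0.
Qed.


Local Notation dd := (DD n).+1.
Local Notation Ix := (('I_dd + ('I_dd * ('I_n * 'I_n))) + (('I_n * 'I_n) + unit))%type.
Local Notation Tz := {ptws Ix -> R}.

Definition wz (z : Tz) (t : 'I_dd) : R := z (inl (inl t)).
Definition Yz (z : Tz) (t : 'I_dd) : 'M[R]_n := \matrix_(i, j) z (inl (inr (t, (i, j)))).
Definition Zz (z : Tz) : 'M[R]_n := \matrix_(i, j) z (inr (inl (i, j))).
Definition sz (z : Tz) : R := z (inr (inr tt)).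
Definition Xz (z : Tz) : 'M[R]_n := \sum_t wz z t *: Yz z t.

Local Notation Jr := (('I_m1 + ('I_n * 'I_n)) + unit)%type.

Definition res (X Z : 'M[R]_n) (s : R) (k : Jr) : R :=
  match k with
  | inl (inl l) => inner (A1 l) X - b1 l
  | inl (inr (i, j)) => X i j - Z i j
  | inr _ => inner C X - s
  end.

Definition Fobj (X Z : 'M[R]_n) (s : R) := \sum_k (res X Z s k) ^+ 2.

Lemma sum_Jr (f : Jr -> R) :
  \sum_k f k = \sum_l f (inl (inl l)) + \sum_i \sum_j f (inl (inr (i, j))) + f (inr tt).
Proof.
rewrite big_sumType /= big_sumType /= pair_big /=.
congr (_ + _ + _); first by apply: eq_bigr => -[].
by rewrite (big_pred1 tt) // => -[].
Qed.


Lemma Xz_entry z i j : Xz z i j = \sum_t z (inl (inl t)) * z (inl (inr (t, (i, j)))).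
Proof. by rewrite /Xz summxE; apply: eq_bigr => t _; rewrite !mxE. Qed.

Lemma cont_Xz i j : continuous (fun z => Xz z i j).
Proof.
have -> : (fun z => Xz z i j) =
   (fun z : Tz => \sum_(t <- index_enum 'I_dd) z (inl (inl t)) * z (inl (inr (t, (i, j))))).
  by apply/funext => z; rewrite Xz_entry.
by apply: cont_sum => t; apply: cont_mul; apply: cont_proj.
Qed.

Lemma cont_inner (M : 'M[R]_n) (Mz : Tz -> 'M[R]_n) :
  (forall i j, continuous (fun z => Mz z i j)) -> continuous (fun z => inner M (Mz z)).
Proof.
move=> cM.
have -> : (fun z => inner M (Mz z)) =
   (fun z => \sum_(i <- index_enum 'I_n) \sum_(j <- index_enum 'I_n) M i j * Mz z j i).
  by apply/funext => z; rewrite innerE.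
apply: cont_sum => i; apply: cont_sum => j; apply: cont_mul => //; exact: cont_cst.
Qed.


Lemma cont_Yz t i j : continuous (fun z => Yz z t i j).
Proof.
have -> : (fun z => Yz z t i j) = (fun z : Tz => z (inl (inr (t, (i, j))))).
  by apply/funext => z; rewrite mxE.
exact: cont_proj.
Qed.

Lemma cont_Zz i j : continuous (fun z => Zz z i j).
Proof.
have -> : (fun z => Zz z i j) = (fun z : Tz => z (inr (inl (i, j)))).
  by apply/funext => z; rewrite mxE.
exact: cont_proj.
Qed.

Lemma cont_res k : continuous (fun z => res (Xz z) (Zz z) (sz z) k).
Proof.
case: k => [[l|[i j]]|u] /=.
- by apply: cont_sub; [apply: cont_inner; exact: cont_Xz | exact: cont_cst].
- by apply: cont_sub; [exact: cont_Xz | exact: cont_Zz].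
- by apply: cont_sub; [apply: cont_inner; exact: cont_Xz | exact: cont_proj].
Qed.

Lemma cont_F : continuous (fun z => Fobj (Xz z) (Zz z) (sz z)).
Proof.
apply: cont_sum => k.
have -> : (fun z => res (Xz z) (Zz z) (sz z) k ^+ 2) =
  (fun z => res (Xz z) (Zz z) (sz z) k * res (Xz z) (Zz z) (sz z) k).
  by apply/funext => z; rewrite expr2.
by apply: cont_mul; exact: cont_res.
Qed.

Lemma closed_sym (Mz : Tz -> 'M[R]_n) : (forall i j, continuous (fun z => Mz z i j)) ->
  closed [set z | symmx (Mz z)].
Proof.
move=> cM.
have -> : [set z | symmx (Mz z)] = [set z | forall i, forall j, Mz z i j = Mz z j i].
  apply/seteqP; split => z /=; first exact: symmx_symf.
  exact: symf_symmx.
by apply: closed_forall => i; apply: closed_forall => j; apply: closed_eqf.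
Qed.

Lemma closed_psd (Mz : Tz -> 'M[R]_n) : (forall i j, continuous (fun z => Mz z i j)) ->
  closed [set z | psd (Mz z)].
Proof.
move=> cM; apply: closed_and; first exact: closed_sym.
apply: closed_forall => v; apply: closed_lef; first exact: cont_cst.
have -> : (fun z => (v^T *m Mz z *m v) 0 0) =
  (fun z => \sum_(i <- index_enum 'I_n) \sum_(j <- index_enum 'I_n) v i 0 * Mz z i j * v j 0).
  by apply/funext => z; rewrite quadE.
apply: cont_sum => i; apply: cont_sum => j.
by apply: cont_mul; [apply: cont_mul => //|]; exact: cont_cst.
Qed.

Lemma closed_P t : closed [set z : Tz | P (Yz z t)].
Proof.
apply: closed_and; first by apply: closed_sym => i j; exact: cont_Yz.
apply: closed_and.
  apply: closed_forall => l; apply: closed_eqf; last exact: cont_cst.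
  by apply: cont_inner => i j; exact: cont_Yz.
apply: closed_forall => i; apply: closed_forall => j; apply: closed_imp.
apply: closed_exseq => c; apply: closed_eqf; [exact: cont_Yz | exact: cont_cst].
Qed.

Definition Om_w (z : Tz) := (forall t, 0 <= wz z t) /\
  (\sum_t wz z t = 1) /\ (forall t, P (Yz z t)).

Definition Om (a lo MZ : R) : set Tz := [set z | (forall t, 0 <= wz z t) /\
  (\sum_t wz z t = 1) /\ (forall t, P (Yz z t)) /\ psd (Zz z) /\
  lo <= sz z /\ sz z <= a /\ (forall i j, - MZ <= Zz z i j /\ Zz z i j <= MZ)].

Lemma closed_Om a lo MZ : closed (Om a lo MZ).
Proof.
apply: closed_and.
  apply: closed_forall => t; apply: closed_lef; [exact: cont_cst | exact: cont_proj].
apply: closed_and.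
  apply: closed_eqf; last exact: cont_cst.
  by apply: cont_sum => t; exact: cont_proj.
apply: closed_and; first by apply: closed_forall => t; exact: closed_P.
apply: closed_and; first by apply: closed_psd; exact: cont_Zz.
apply: closed_and; first by apply: closed_lef; [exact: cont_cst | exact: cont_proj].
apply: closed_and; first by apply: closed_lef; [exact: cont_proj | exact: cont_cst].
apply: closed_forall => i; apply: closed_forall => j.
apply: closed_and; apply: closed_lef; (exact: cont_cst || exact: cont_Zz).
Qed.


Lemma rep X Z s : conv P X -> exists z : Tz,
  [/\ Om_w z, Xz z = X, Zz z = Z & sz z = s].
Proof.
move=> /caratheodory [w [Y [w0 s1 PY eX]]].
pose z : Tz := fun k => match k with
  | inl (inl t) => w t
  | inl (inr (t, (i, j))) => Y t i j
  | inr (inl (i, j)) => Z i j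
  | inr (inr _) => s end.
have eY t : Yz z t = Y t by apply/matrixP => i j; rewrite mxE.
exists z; split => //.
- by split => //; split => // t; rewrite eY.
- by rewrite eX /Xz; apply: eq_bigr => t _; rewrite eY.
- by apply/matrixP => i j; rewrite mxE.
Qed.


Lemma quad_lemma (G1 G2 : R) : 0 <= G2 ->
  (forall t, 0 < t -> t <= 1 -> 0 <= 2 * t * G1 + t ^+ 2 * G2) -> 0 <= G1.
Proof.
move=> G20 H; rewrite leNgt; apply/negP => G1n.
pose t := - G1 / (G2 - G1).
have den : 0 < G2 - G1 by lra.
have t0 : 0 < t by rewrite /t divr_gt0 // oppr_gt0.
have t1 : t <= 1 by rewrite /t ler_pdivrMr // mul1r; lra.
have := H t t0 t1.
have -> : 2 * t * G1 + t ^+ 2 * G2 = t * (2 * G1 + t * G2) by rewrite expr2; ring.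
have : t * G2 <= - G1.
  have hx : G2 / (G2 - G1) <= 1 by rewrite ler_pdivrMr // mul1r; lra.
  have -> : t * G2 = - G1 * (G2 / (G2 - G1)) by rewrite /t; field; rewrite gt_eqF.
  by rewrite -[X in _ <= X]mulr1; apply: ler_wpM2l => //; lra.
move=> h; rewrite pmulr_rge0 //; lra.
Qed.

Lemma Fobj_ge_term X Z s k : (res X Z s k) ^+ 2 <= Fobj X Z s.
Proof.
rewrite /Fobj (bigD1 k) //= lerDl; apply: sumr_ge0 => i _; exact: sqr_ge0.
Qed.

Lemma Fobj_ge0 X Z s : 0 <= Fobj X Z s.
Proof. apply: sumr_ge0 => i _; exact: sqr_ge0. Qed.

Lemma res_comb Xs Zs ss X Z s t k :
  res ((1 - t) *: Xs + t *: X) ((1 - t) *: Zs + t *: Z) ((1 - t) * ss + t * s) k =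
  res Xs Zs ss k + t * (res X Z s k - res Xs Zs ss k).
Proof.
case: k => [[l|[i j]]|u] /=; rewrite ?inner_lin ?mxE /=; ring.
Qed.

Lemma Fobj_comb Xs Zs ss X Z s t :
  Fobj ((1 - t) *: Xs + t *: X) ((1 - t) *: Zs + t *: Z) ((1 - t) * ss + t * s) =
  Fobj Xs Zs ss + 2 * t * (\sum_k res Xs Zs ss k * (res X Z s k - res Xs Zs ss k))
  + t ^+ 2 * \sum_k (res X Z s k - res Xs Zs ss k) ^+ 2.
Proof.
rewrite /Fobj !mulr_sumr -!big_split /=; apply: eq_bigr => k _.
by rewrite res_comb; ring.
Qed.

Lemma psd_comb (Zs Z : 'M[R]_n) t : psd Zs -> psd Z -> 0 <= t <= 1 -> psd ((1 - t) *: Zs + t *: Z).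
Proof.
move=> /psd_psdq[s1 p1] /psd_psdq[s2 p2] /andP[t0 t1].
apply: psdq_psd; first by apply: symf_add; apply: symf_scale.
by apply: psdq_add; apply: psdq_scale => //; rewrite subr_ge0.
Qed.


Lemma w_le1 z : Om_w z -> forall t, wz z t <= 1.
Proof.
move=> [w0 [s1 _]] t; rewrite -s1 (bigD1 t) //= lerDl.
by apply: sumr_ge0 => i _; exact: w0.
Qed.

Lemma Om_bound a lo MZ MP : (forall Y, P Y -> forall i j, `|Y i j| <= MP) ->
  forall z, Om a lo MZ z -> forall k, `|z k| <= 1 + `|MP| + `|MZ| + `|lo| + `|a|.
Proof.
move=> hP z Oz k.
have Ow : Om_w z by case: Oz => [w0 [s1 [PY _]]].
case: Oz => [w0 [s1 [PY [pZ [slo [sa bZ]]]]]].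
have h0 := normr_ge0 MP; have h1 := normr_ge0 MZ; have h2 := normr_ge0 lo.
have h3 := normr_ge0 a.
case: k => [[t|[t [i j]]]|[[i j]|u]].
- have := w_le1 Ow t; have := w0 t; rewrite /wz => ha hb.
  rewrite ger0_norm //; lra.
- have := hP _ (PY t) i j; rewrite mxE => h; have := ler_norm MP; lra.
- have := bZ i j; rewrite mxE => -[hl hr]; have := ler_norm MZ.
  have : `|z (inr (inl (i, j)))| <= MZ by rewrite ler_norml hl hr.
  lra.
- case: u slo sa; rewrite /sz => slo sa.
  have : `|z (inr (inr tt))| <= `|lo| + `|a|.
    have /andP[hl1 hl2] : - `|lo| <= lo <= `|lo| by rewrite -ler_norml.
    have /andP[ha1 ha2] : - `|a| <= a <= `|a| by rewrite -ler_norml.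
    rewrite ler_norml; apply/andP; split; lra.
  lra.
Qed.

Lemma strong (a : R) : mx_bounded P ->
  (exists X0, P X0 /\ lin_eq A1 b1 X0 /\ psd X0) ->
  (forall X, lin_eq A1 b1 X -> psd X -> conv P X -> a < inner C X) ->
  exists S lam, psd S /\ forall Y, P Y -> a <= Lg S lam Y.
Proof.
move=> [MP hP] [X0 [PX0 [lX0 pX0]]] Ha.
have hK X : conv P X -> forall i j, `|X i j| <= MP := fun cX => conv_bound hP cX.
pose F0 := Fobj X0 0 a.
have F0ge : 0 <= F0 by apply: Fobj_ge0.
pose cK := \sum_i \sum_j `|C i j| * `|MP|.
pose MZ := `|MP| + F0 + 2.
pose lo := - (cK + F0 + 2 + `|a|).
have cKb X : conv P X -> `|inner C X| <= cK.
  move=> cX; rewrite innerE; apply: le_trans (ler_norm_sum _ _ _) _.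
  apply: ler_sum => i _; apply: le_trans (ler_norm_sum _ _ _) _.
  apply: ler_sum => j _; rewrite normrM; apply: ler_wpM2l => //.
  by apply: le_trans (hK _ cX j i) (ler_norm _).
have [z0 [Ow0 eX0 eZ0 es0]] := rep 0 a (conv_of PX0).
have Oz0 : Om a lo MZ z0.
  case: Ow0 => [w0 [s1 PY]]; do 3! split => //.
  split; first by rewrite eZ0; apply: psdq_psd => [i j|u]; rewrite ?qfZ ?mxE //;
    rewrite /qf /bil big1 // => i _; rewrite big1 // => j _; rewrite mxE; ring.
  have := normr_ge0 cK; have := normr_ge0 a; have := ler_norm cK.
  have /andP[ha1 ha2] : - `|a| <= a <= `|a| by rewrite -ler_norml.
  have : 0 <= cK by apply: sumr_ge0 => i _; apply: sumr_ge0 => j _; apply: mulr_ge0.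
  rewrite es0 /lo => *; split; first lra.
  split; first lra.
  move=> i j; rewrite eZ0 mxE; have := normr_ge0 MP; rewrite /MZ; split; lra.
have [zs Ozs zmin] := min_exists (ex_intro _ z0 Oz0) (@closed_Om a lo MZ)
  (Om_bound hP) cont_F.
set Xs := Xz zs; set Zs := Zz zs; set ss := sz zs.
have [Owz [pZs [slo [ssa bZs]]]] : Om_w zs /\ psd Zs /\ lo <= ss /\ ss <= a /\
   (forall i j, - MZ <= Zs i j /\ Zs i j <= MZ).
  by case: Ozs => [w0 [s1 [PY H]]].
have cXs : conv P Xs.
  by case: Owz => [w0 [s1 PY]]; exists dd, (wz zs), (Yz zs).
have Fz0 : Fobj Xs Zs ss <= F0.
  by have := zmin z0 Oz0; rewrite eX0 eZ0 es0.
have Fmin X Z s : conv P X -> psd Z -> s <= a -> Fobj Xs Zs ss <= Fobj X Z s.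
  move=> cX pZ sa.
  have [inb|outb] := pselect ((forall i j, - MZ <= Z i j /\ Z i j <= MZ) /\ lo <= s).
    have [z [Ow eX eZ es]] := rep Z s cX.
    have Oz : Om a lo MZ z.
      case: Ow => [w0 [s1 PY]]; case: inb => bZ slo'.
      by rewrite /Om /= eZ es; do 6! split => //.
    by have := zmin z Oz; rewrite eX eZ es.
  apply: le_trans Fz0 _; apply: ltW.
  have := normr_ge0 a; have := normr_ge0 MP; have := ler_norm MP => hm0 hm1 ha0.
  have [slo'|slo'] := ltP s lo.
    have := Fobj_ge_term X Z s (inr tt); rewrite /=.
    have := cKb X cX; rewrite ler_norml => /andP[c1 c2] hF.
    have hc : F0 + 2 < inner C X - s by rewrite /lo in slo'; lra.
    nra.
  have [i [j hij]] : exists i j, ~ (- MZ <= Z i j /\ Z i j <= MZ).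
    apply/not_existsP => H; apply: outb; split => // i j.
    by apply: contrapT => hn; apply: (H i); exists j.
  have := Fobj_ge_term X Z s (inl (inr (i, j))); rewrite /= => hF.
  have := hK X cX i j; rewrite ler_norml => /andP[x1 x2].
  have [h1|h1] := ltP (Z i j) (- MZ).
    have hd : F0 + 2 < X i j - Z i j by rewrite /MZ in h1; lra.
    nra.
  have [h2|h2] := ltP MZ (Z i j).
    have hd : X i j - Z i j < - (F0 + 2) by rewrite /MZ in h2; lra.
    nra.
  by exfalso; apply: hij.
have var X Z s : conv P X -> psd Z -> s <= a ->
    0 <= \sum_k res Xs Zs ss k * (res X Z s k - res Xs Zs ss k).
  move=> cX pZ sa; apply: (quad_lemma (G2 := \sum_k (res X Z s k - res Xs Zs ss k) ^+ 2)).
    by apply: sumr_ge0 => k _; exact: sqr_ge0.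
  move=> t t0 t1.
  have := Fmin ((1 - t) *: Xs + t *: X) ((1 - t) *: Zs + t *: Z) ((1 - t) * ss + t * s).
  rewrite Fobj_comb -addrA lerDl; apply.
  - by apply: conv_comb2 => //; rewrite ltW.
  - by apply: psd_comb => //; rewrite ltW.
  - have : 0 <= 1 - t by lra.
    move=> h; nra.
pose q := Fobj Xs Zs ss.
have qE : q = \sum_l (inner (A1 l) Xs - b1 l) ^+ 2 +
    \sum_i \sum_j (Xs i j - Zs i j) ^+ 2 + (inner C Xs - ss) ^+ 2.
  by rewrite /q /Fobj sum_Jr.
have varE X Z s : conv P X -> psd Z -> s <= a ->
  q <= \sum_l (inner (A1 l) Xs - b1 l) * (inner (A1 l) X - b1 l) +
    \sum_i \sum_j (Xs i j - Zs i j) * (X i j - Z i j) +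
    (inner C Xs - ss) * (inner C X - s).
  move=> cX pZ sa; have := var X Z s cX pZ sa.
  have -> : \sum_k res Xs Zs ss k * (res X Z s k - res Xs Zs ss k) =
     \sum_k res Xs Zs ss k * res X Z s k - q.
    by rewrite /q /Fobj -sumrB; apply: eq_bigr => k _; ring.
  by rewrite subr_ge0 sum_Jr.
have qpos : 0 < q.
  rewrite lt_def Fobj_ge0 andbT; apply/eqP => q0.
  have r0 k : res Xs Zs ss k = 0.
    have := @psumr_eq0P _ _ predT (fun k => res Xs Zs ss k ^+ 2)
      (fun k _ => sqr_ge0 _) q0 k isT.
    by move/eqP; rewrite sqrf_eq0 => /eqP.
  have lXs : lin_eq A1 b1 Xs by move=> l; apply/eqP; rewrite -subr_eq0; apply/eqP; exact: (r0 (inl (inl l))).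
  have eXZ : Xs = Zs.
    by apply/matrixP => i j; apply/eqP; rewrite -subr_eq0; apply/eqP; exact: (r0 (inl (inr (i, j)))).
  have eC : inner C Xs = ss by apply/eqP; rewrite -subr_eq0; apply/eqP; exact: (r0 (inr tt)).
  have := Ha Xs lXs; rewrite eXZ in cXs *; move=> /(_ pZs cXs).
  by rewrite -eXZ eC ltNge ssa.
pose E : 'M[R]_n := Xs - Zs.
have Eneg v : qf E v <= 0.
  have pZv : psd (Zs + r1 v).
    have [sZ pZ] := psd_psdq pZs.
    by apply: psdq_psd; [apply: symf_add => //; exact: r1_sym |
                         apply: psdq_add => //; exact: r1_psdq].
  have := varE Xs (Zs + r1 v) ss cXs pZv ssa.
  have -> : \sum_i \sum_j (Xs i j - Zs i j) * (Xs i j - (Zs + r1 v) i j) =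
            \sum_i \sum_j (Xs i j - Zs i j) ^+ 2 - qf E v.
    rewrite /qf /bil -sumrB; apply: eq_bigr => i _; rewrite -sumrB.
    by apply: eq_bigr => j _; rewrite !mxE; ring.
  rewrite qE.
  have -> : \sum_l (inner (A1 l) Xs - b1 l) * (inner (A1 l) Xs - b1 l) =
            \sum_l (inner (A1 l) Xs - b1 l) ^+ 2 by apply: eq_bigr => l _; rewrite expr2.
  rewrite -expr2; lra.
have rho0 : 0 <= inner C Xs - ss.
  have := varE Xs Zs (ss - 1) cXs pZs ltac:(lra).
  have -> : \sum_l (inner (A1 l) Xs - b1 l) * (inner (A1 l) Xs - b1 l) =
            \sum_l (inner (A1 l) Xs - b1 l) ^+ 2 by apply: eq_bigr => l _; rewrite expr2.
  have -> : \sum_i \sum_j (Xs i j - Zs i j) * (Xs i j - Zs i j) =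
            \sum_i \sum_j (Xs i j - Zs i j) ^+ 2.
    by apply: eq_bigr => i _; apply: eq_bigr => j _; rewrite expr2.
  rewrite qE; nra.
have key Y : P Y -> q <= \sum_l (inner (A1 l) Xs - b1 l) * (inner (A1 l) Y - b1 l) +
    frob E Y + (inner C Xs - ss) * (inner C Y - a).
  move=> PY.
  have p0 : psd (0 : 'M[R]_n).
    apply: psdq_psd => [i j|u]; rewrite ?mxE //.
    by rewrite /qf /bil big1 // => i _; rewrite big1 // => j _; rewrite mxE; ring.
  have := varE Y 0 a (conv_of PY) p0 (lexx a).
  suff -> : \sum_i \sum_j (Xs i j - Zs i j) * (Y i j - (0 : 'M[R]_n) i j) = frob E Y by [].
  by apply: eq_bigr => i _; apply: eq_bigr => j _; rewrite !mxE subr0.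
have [sX0 pX0'] := psd_psdq pX0.
have [rz|rp] := eqVneq (inner C Xs - ss) 0.
  exfalso.
  have := key X0 PX0; rewrite rz mul0r addr0.
  rewrite big1; last by move=> l _; rewrite lX0 subrr mulr0.
  rewrite add0r => hq.
  have : 0 <= frob ((-1) *: E) X0.
    apply: frob_psd_ge0 => // u; rewrite qfZ; have := Eneg u; lra.
  rewrite frobZl; lra.
have rpos : 0 < inner C Xs - ss by rewrite lt_def rp rho0.
set rho := inner C Xs - ss.
pose S : 'M[R]_n := (- (2 * rho)^-1) *: (E + E^T).
exists S, (fun l => (inner (A1 l) Xs - b1 l) / rho); split.
  apply: psdq_psd.
    by move=> i j; rewrite !mxE addrC.
  move=> u; rewrite /S qfZ qfD qfT.
  have := Eneg u => h.
  have -> : - (2 * rho)^-1 * (qf E u + qf E u) = - qf E u / rho by field; rewrite gt_eqF.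
  by apply: divr_ge0; [lra | exact: ltW].
move=> Y PY.
have sY : symf Y by case: PY => /symmx_symf.
rewrite /Lg (inner_frob S sY) /S frobZl frobDl frobTl //.
have -> : \sum_(i < m1) (inner (A1 i) Xs - b1 i) / rho * (inner (A1 i) Y - b1 i) =
   (\sum_(i < m1) (inner (A1 i) Xs - b1 i) * (inner (A1 i) Y - b1 i)) / rho.
  by rewrite mulr_suml; apply: eq_bigr => i _; rewrite mulrAC.
have := key Y PY.
set t1 := \sum_(i < m1) _; set t2 := frob E Y => hk.
have h0 : 0 <= (t1 + t2 + rho * (inner C Y - a)) / rho.
  by apply: divr_ge0; [rewrite -/rho in hk; lra | exact: ltW].
have -> : inner C Y - - (2 * rho)^-1 * (t2 + t2) + t1 / rho =
   a + (t1 + t2 + rho * (inner C Y - a)) / rho by field; rewrite gt_eqF.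
lra.
Qed.

End Main.


Theorem theorem1 (R : realType) (n m1 m2 : nat)
  (C : 'M[R]_n) (A1 : 'I_m1 -> 'M[R]_n) (b1 : 'I_m1 -> R)
  (A2 : 'I_m2 -> 'M[R]_n) (b2 : 'I_m2 -> R)
  (J : {set 'I_n * 'I_n}) (B : 'I_n -> 'I_n -> seq int) :
  symmx C -> (forall i, symmx (A1 i)) -> (forall i, symmx (A2 i)) ->
  mx_bounded (Pset A2 b2 J B) ->
  let F := [set X | Pset A2 b2 J B X /\ lin_eq A1 b1 X /\ psd X] in
  F !=set0 -> mx_bounded F ->
  let g := fun (S : 'M[R]_n) (lam : 'I_m1 -> R) =>
    ereal_inf [set ((inner C X - inner S X
                     + \sum_(i < m1) lam i * (inner (A1 i) X - b1 i))%:E)%E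
              | X in Pset A2 b2 J B] in
  let zLD := ereal_sup [set g S lam | S in [set S : 'M[R]_n | psd S] & lam in [set: 'I_m1 -> R]] in
  let zhat := ereal_inf [set (inner C X)%:E
              | X in [set X | lin_eq A1 b1 X /\ psd X /\ conv (Pset A2 b2 J B) X]] in
  zLD = zhat.
Proof.
move=> sC sA1 sA2 bP F [X0 FX0] Fb g zLD zhat.
have ex0 : exists X0, Pset A2 b2 J B X0 /\ lin_eq A1 b1 X0 /\ psd X0 by exists X0.
case: FX0 => PX0 [lX0 pX0].
have le1 : (zLD <= zhat)%E.
  apply: ge_ereal_sup => _ [S pS [lam _ <-]].
  apply: le_ereal_inf_tmp => _ [X [lX [pX cX]] <-].
  by rewrite /g; apply: weak.
apply: le_anti; rewrite le1 /=.
have hz : (zhat <= (inner C X0)%:E)%E.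
  by apply: ereal_inf_lbound; exists X0 => //; split => //; split => //; exact: conv_of.
move: hz; case E: zhat => [r| |] hz.
- apply/lee_subgt0Pr => e e0.
  have H : forall X, lin_eq A1 b1 X -> psd X -> conv (Pset A2 b2 J B) X -> r - e < inner C X.
    move=> X lX pX cX.
    have : (zhat <= (inner C X)%:E)%E by apply: ereal_inf_lbound; exists X.
    by rewrite E lee_fin => h; lra.
  have [S [lam [pS HS]]] := strong bP ex0 H.
  apply: (@le_trans _ _ (g S lam)).
    apply: le_ereal_inf_tmp => _ [Y PY <-]; rewrite -EFinB lee_fin; exact: HS.
  apply: le_ereal_sup_tmp; exists (g S lam) => //; exists S => //; exists lam => //.
- by [].
- by rewrite leNye.
Qed.
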